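(* Let $\beta,\gamma\in\mathbb{C}$ with $\gamma\neq1$ and $\beta\neq\gamma$, let $c\in\mathbb{C}\setminus\{0\}$, and for index $n$ consider the discrete system for $(x_n,y_n)$ \[ (x_{n+1}+y_n)(x_n+y_n)=\frac{\gamma-1}{c^2}\,y_n(y_n-c)\Big(y_n-c\frac{\gamma-\beta}{\gamma-1}\Big),\quad (x_n+y_{n-1})(x_n+y_n)=\frac{x_n(x_n+c)}{x_n-\frac{cn}{\gamma-1}}\Big(x_n+c\frac{\gamma-\beta}{\gamma-1}\Big), \] together with the differential system in $c$ \[ \begin{aligned} \frac{dx}{dc}&=\frac{(n+1)x+ny}{c}-\frac{\gamma-1}{c^2}x(x+y)+\frac{x(x+c)\big(c(\gamma-\beta)+(\gamma-1)x\big)}{c^2(x+y)},\\ \frac{dy}{dc}&=-x+\frac{y}{c}+y\Big(-1+\frac{(\beta-1)(y-c)}{c(x+y)}+\frac{(\gamma-1)(y-c)^2}{c^2(x+y)}\Big). \end{aligned} \] Define the birational change of variables and parameter identification \[ q=\frac{(\gamma-1)y(y-c)}{c^2(x+y)},\qquad p=\frac{c(x+c)}{y-c}+\frac{c^2(\gamma+n+1-\beta)(x+y)}{c^2x+y\big(c(\gamma+c-1)-(\gamma-1)y\big)},\qquad t=c, \] \[ a_0=n+1,\quad a_1=\gamma-1,\quad a_2=2-\beta,\quad a_3=-\gamma-n. \] Then this change of variables simultaneously transforms the discrete system into the discrete Painlev\'e equation \[ q_{n+1}=\frac{p_n+t}{t}\Big(1-\frac{a_0+a_1}{a_0+(p_n+t)q_n}\Big),\qquad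 p_{n+1}=\frac{1}{1-q_{n+1}}\Big(a_2+\frac{(a_0+a_1)p_n}{t+p_n-t\,q_{n+1}}\Big), \] with parameter evolution $n\mapsto n+1$ given by $(a_0,a_1,a_2,a_3)\mapsto(a_0+1,a_1,a_2,a_3-1)$ (the $a_i$ in the equations being those at index $n$), and transforms the differential system into the Hamiltonian system \[ \frac{dq}{dt}=\frac{1}{t}\Big(q(q-1)(2p+t)-a_1(q-1)-a_3q\Big),\qquad \frac{dp}{dt}=\frac{1}{t}\Big(p(p+t)(1-2q)+(a_1+a_3)p-a_2t\Big). \]
   Context: The discrete system arises from the recurrence coefficients of polynomials orthogonal with respect to the generalised Meixner weight $\frac{(\gamma)_kc^k}{(\beta)_kk!}$ on $\mathbb{Z}_{\ge0}$. The Hamiltonian system is a Hamiltonian form of the fifth Painlev\'e equation, with $a_0+a_1+a_2+a_3=1$. *)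

(* Defs.v *)
From HB Require Import structures.
From mathcomp Require Import all_boot all_order all_algebra.
From mathcomp Require Import complex.
From mathcomp Require Import reals topology normedtype derive.

Set Implicit Arguments.
Unset Strict Implicit.
Unset Printing Implicit Defensive.

Import Order.TTheory GRing.Theory Num.Theory.
Local Open Scope ring_scope.

Section GenPV.
Variable C : fieldType.

(* Parameter identification (index n).  NB: a3 is fixed by the
   normalisation a0+a1+a2+a3 = 1 of the context. *)
Definition a0 (n : nat) : C := n%:R + 1.
Definition a1 (gamma : C) : C := gamma - 1.
Definition a2 (beta : C) : C := 2 - beta.
Definition a3 (beta gamma : C) (n : nat) : C := beta - gamma - n%:R - 1.

Definition qPV (gamma c x y : C) : C :=
  (gamma - 1) * y * (y - c) / (c ^+ 2 * (x + y)).

Definition pden (gamma c x y : C) : C :=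
  c ^+ 2 * x + y * (c * (gamma + c - 1) - (gamma - 1) * y).

Definition pPV (beta gamma : C) (n : nat) (c x y : C) : C :=
  c * (x + c) / (y - c)
  + c ^+ 2 * (gamma + n%:R + 1 - beta) * (x + y) / pden gamma c x y.

Definition disc_eq1 (beta gamma c : C) (xn1 xn yn : C) : Prop :=
  (xn1 + yn) * (xn + yn)
  = (gamma - 1) / c ^+ 2 * yn * (yn - c)
      * (yn - c * (gamma - beta) / (gamma - 1)).

Definition disc_eq2 (beta gamma c : C) (n : nat) (xn ynm1 yn : C) : Prop :=
  (xn + ynm1) * (xn + yn)
  = xn * (xn + c) / (xn - c * n%:R / (gamma - 1))
      * (xn + c * (gamma - beta) / (gamma - 1)).

Definition dP_q (A0 A1 t q p : C) : C :=
  (p + t) / t * (1 - (A0 + A1) / (A0 + (p + t) * q)).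

Definition dP_p (A0 A1 A2 t qnext p : C) : C :=
  1 / (1 - qnext) * (A2 + (A0 + A1) * p / (t + p - t * qnext)).

Definition ode_x (beta gamma : C) (n : nat) (c x y : C) : C :=
  ((n%:R + 1) * x + n%:R * y) / c - (gamma - 1) / c ^+ 2 * x * (x + y)
  + x * (x + c) * (c * (gamma - beta) + (gamma - 1) * x) / (c ^+ 2 * (x + y)).

Definition ode_y (beta gamma : C) (c x y : C) : C :=
  - x + y / c
  + y * (-1 + (beta - 1) * (y - c) / (c * (x + y))
         + (gamma - 1) * (y - c) ^+ 2 / (c ^+ 2 * (x + y))).

Definition ham_q (A1 A3 t q p : C) : C :=
  (q * (q - 1) * (2 * p + t) - A1 * (q - 1) - A3 * q) / t.

Definition ham_p (A1 A2 A3 t q p : C) : C :=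
  (p * (p + t) * (1 - 2 * q) + (A1 + A3) * p - A2 * t) / t.

End GenPV.
Arguments a0 {C} n.

(* The complex numbers C = R[i] over the real numbers R : realType, packaged
   as a numClosedFieldType so that mathcomp-analysis' normed structure (and
   hence complex differentiation) applies. *)
Definition CC (R : realType) : numClosedFieldType := (R : rcfType)[i].

(* Main.v *)
Require Import Defs.
From HB Require Import structures.
From mathcomp Require Import all_boot all_order all_algebra.
From mathcomp Require Import complex.
From mathcomp Require Import reals topology normedtype derive.
From mathcomp Require Import ring.
Import Order.TTheory GRing.Theory Num.Theory.
Import numFieldNormedType.Exports.
Local Open Scope ring_scope.

Set Implicit Arguments.
Ltac splitall := repeat (apply/andP; split).

Lemma neq0_mul {C : fieldType} {P E : C} (K : C) : P = E * K -> E != 0 -> K != 0 -> P != 0.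
Proof. by move=> -> h1 h2; rewrite mulf_neq0. Qed.

Lemma pdenE (C : fieldType) (g c x y : C) : c != 0 -> x + y != 0 ->
  pden g c x y = c ^+ 2 * (x + y) * (1 - qPV g c x y).
Proof. move=> c0 xy0; rewrite /pden /qPV; field; by splitall. Qed.

Lemma S3 (C : fieldType) (b g c y x1 N : C) : c != 0 -> g - 1 != 0 -> x1 + y != 0 ->
  x1 != 0 -> x1 + c != 0 -> x1 + c * (g - b) / (g - 1) != 0 -> x1 - c * (N+1) / (g - 1) != 0 ->
  (x1 + c) * (c + ((y - c * (g - b) / (g - 1)) * ((g - 1) * y / (c * (x1 + y))
        - (g + N + 1 - b) / (x1 + c * (g - b) / (g - 1))) - c)
     - c * qPV g c x1 (x1 * (x1 + c) / (x1 - c * (N+1) / (g - 1)) * (x1 + c * (g - b) / (g - 1)) / (x1 + y) - x1))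
  + (N + g) * ((x1 * (x1 + c) / (x1 - c * (N+1) / (g - 1)) * (x1 + c * (g - b) / (g - 1)) / (x1 + y) - x1) - c) = 0.
Proof.
move=> c0 g0 u0 hx1 hx1c hx1B hM.
rewrite /qPV.
field.
splitall; try done.
- apply: (neq0_mul (g - 1) _ hM) => //. field. by splitall.
- apply: (neq0_mul (g - 1) _ (mulf_neq0 (mulf_neq0 hx1 hx1c) hx1B)) => //. field. by splitall.
- apply: (neq0_mul (g - 1) _ hx1B) => //. field. by splitall.
Qed.

Lemma fin_p (C : fieldType) (b g c x1 y1 N P Q1 : C) : c != 0 -> y1 - c != 0 -> 1 - Q1 != 0 ->
  c + P - c * Q1 != 0 -> (x1 + c) * (c + P - c * Q1) + (N + g) * (y1 - c) = 0 ->
  c * (x1 + c) / (y1 - c) + (g + (N + 1) + 1 - b) / (1 - Q1) = dP_p (N+1) (g-1) (2 - b) c Q1 P.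
Proof.
move=> c0 y1c q1 a0 key.
have -> : x1 + c = - (N + g) * (y1 - c) / (c + P - c * Q1).
  apply: (mulIf a0). rewrite mulfVK //. apply/eqP. by rewrite -subr_eq0 mulNr opprK key.
rewrite /dP_p. field. by splitall.
Qed.

Lemma QPform (C : fieldType) (b g c x y x1 N : C) :
  c != 0 -> g - 1 != 0 -> x + y != 0 -> x1 + y != 0 -> y - c != 0 -> x1 + c * (g - b) / (g - 1) != 0 ->
  (x1 + y) * (x + y) = (g - 1) / c ^+ 2 * y * (y - c) * (y - c * (g - b) / (g - 1)) ->
  pden g c x y != 0 ->
  qPV g c x y = (x1 + y) / (y - c * (g - b) / (g - 1)) /\
  c * (x + c) / (y - c) + c ^+ 2 * (g + N + 1 - b) * (x + y) / pden g c x y = ((y - c * (g - b) / (g - 1)) * ((g - 1) * y / (c * (x1 + y)) - (g + N + 1 - b) / (x1 + c * (g - b) / (g - 1))) - c).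
Proof.
move=> c0 g0 xy0 x1y0 yc hx1B e1 pd0.
have R1nz : (g - 1) / c ^+ 2 * y * (y - c) * (y - c * (g - b) / (g - 1)) != 0.
  by rewrite -e1 mulf_neq0.
have hy0 : y != 0 by move: R1nz; rewrite !mulf_eq0 !negb_or => /andP[/andP[/andP[]]].
have hyB : y - c * (g - b) / (g - 1) != 0 by move: R1nz; rewrite !mulf_eq0 !negb_or => /andP[/andP[/andP[]]].
have ex : x = (g - 1) / c ^+ 2 * y * (y - c) * (y - c * (g - b) / (g - 1)) / (x1 + y) - y.
  rewrite -e1; field; done.
have eQ : qPV g c x y = (x1 + y) / (y - c * (g - b) / (g - 1)).
  rewrite /qPV.
  have -> : x + y = (g - 1) / c ^+ 2 * y * (y - c) * (y - c * (g - b) / (g - 1)) / (x1 + y).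
    by rewrite ex addrNK.
  field. splitall => //.
  apply: (neq0_mul (g - 1) _ hyB) => //. field. by splitall.
split => //.
have hQ : 1 - qPV g c x y != 0.
  by move: pd0; rewrite (@pdenE _ g c x y c0 xy0) !mulf_eq0 !negb_or => /andP[].
move: hQ; rewrite (@pdenE _ g c x y c0 xy0) eQ => hQ.
rewrite ex. field. splitall => //.
- apply: (neq0_mul (g - 1) _ hx1B) => //. field. by splitall.
- apply: (neq0_mul (g - 1) _ hyB) => //. field. by splitall.
- apply: (neq0_mul (- (g - 1)) _ hx1B); last by rewrite oppr_eq0. field. by splitall.
- apply: (neq0_mul (g - 1) _ (mulf_neq0 (mulf_neq0 hy0 yc) hyB)) => //. field. by splitall.
Qed.

Lemma disc_q (C : fieldType) (b g c x y x1 y1 N : C) :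
  c != 0 -> g - 1 != 0 -> x + y != 0 -> x1 + y != 0 -> y - c != 0 -> x1 + y1 != 0 ->
  x1 - c * (N+1) / (g - 1) != 0 ->
  (x1 + y) * (x + y) = (g - 1) / c ^+ 2 * y * (y - c) * (y - c * (g - b) / (g - 1)) ->
  (x1 + y) * (x1 + y1) = x1 * (x1 + c) / (x1 - c * (N+1) / (g - 1)) * (x1 + c * (g - b) / (g - 1)) ->
  pden g c x y != 0 ->
  N + 1 + (c * (x + c) / (y - c) + c ^+ 2 * (g + N + 1 - b) * (x + y) / pden g c x y + c) * qPV g c x y != 0 ->
  qPV g c x1 y1 = dP_q (N+1) (g-1) c (qPV g c x y) (c * (x + c) / (y - c) + c ^+ 2 * (g + N + 1 - b) * (x + y) / pden g c x y).
Proof.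
move=> c0 g0 xy0 x1y0 yc x1y10 k0 e1 e2 pd0 a0.
have R2nz : x1 * (x1 + c) / (x1 - c * (N+1) / (g - 1)) * (x1 + c * (g - b) / (g - 1)) != 0.
  by rewrite -e2 mulf_neq0.
have hx1 : x1 != 0 by move: R2nz; rewrite !mulf_eq0 !negb_or => /andP[/andP[/andP[]]].
have hx1c : x1 + c != 0 by move: R2nz; rewrite !mulf_eq0 !negb_or => /andP[/andP[/andP[]]].
have hx1B : x1 + c * (g - b) / (g - 1) != 0 by move: R2nz; rewrite !mulf_eq0 !negb_or => /andP[/andP[/andP[]]].
have R1nz : (g - 1) / c ^+ 2 * y * (y - c) * (y - c * (g - b) / (g - 1)) != 0.
  by rewrite -e1 mulf_neq0.
have hyB : y - c * (g - b) / (g - 1) != 0 by move: R1nz; rewrite !mulf_eq0 !negb_or => /andP[/andP[/andP[]]].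
have ey1 : y1 = x1 * (x1 + c) / (x1 - c * (N+1) / (g - 1)) * (x1 + c * (g - b) / (g - 1)) / (x1 + y) - x1.
  rewrite -e2; field; done.
have [eQ eP] := @QPform _ b g c x y x1 N c0 g0 xy0 x1y0 yc hx1B e1 pd0.
have hP1 : y * (g - 1) - c * (g - b) != 0.
  apply: (neq0_mul (g - 1) _ hyB) => //. field. by splitall.
have hP2 : x1 * (g - 1) + c * (g - b) != 0.
  apply: (neq0_mul (g - 1) _ hx1B) => //. field. by splitall.
have hP4 : x1 * (g - 1) - c * (N + 1) != 0.
  apply: (neq0_mul (g - 1) _ k0) => //. field. by splitall.
have hP5 : x1 * ((x1 * (g - 1) - c * (N + 1)) * (x1 + y)) + (x1 * (x1 + c) * (x1 * (g - 1) + c * (g - b)) + - x1 * ((x1 * (g - 1) - c * (N + 1)) * (x1 + y))) != 0.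
  apply: (neq0_mul (g - 1) _ (mulf_neq0 (mulf_neq0 hx1 hx1c) hx1B)) => //. field. by splitall.
rewrite eQ eP in a0 *.
rewrite ey1 /qPV /dP_q.
field.
splitall => //.
apply: (neq0_mul (c * (x1 + c * (g - b) / (g - 1)) * (y - c * (g - b) / (g - 1)) * (g - 1) ^+ 2) _ a0).
  field. by splitall.
by rewrite !mulf_neq0 // expf_neq0.
Qed.

Lemma disc_p (C : fieldType) (b g c x y x1 y1 N : C) :
  c != 0 -> g - 1 != 0 -> x + y != 0 -> x1 + y != 0 -> y - c != 0 -> x1 + y1 != 0 ->
  x1 - c * (N+1) / (g - 1) != 0 ->
  (x1 + y) * (x + y) = (g - 1) / c ^+ 2 * y * (y - c) * (y - c * (g - b) / (g - 1)) ->
  (x1 + y) * (x1 + y1) = x1 * (x1 + c) / (x1 - c * (N+1) / (g - 1)) * (x1 + c * (g - b) / (g - 1)) ->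
  pden g c x y != 0 -> y1 - c != 0 -> pden g c x1 y1 != 0 ->
  1 - qPV g c x1 y1 != 0 ->
  c + (c * (x + c) / (y - c) + c ^+ 2 * (g + N + 1 - b) * (x + y) / pden g c x y) - c * qPV g c x1 y1 != 0 ->
  c * (x1 + c) / (y1 - c) + c ^+ 2 * (g + (N + 1) + 1 - b) * (x1 + y1) / pden g c x1 y1
  = dP_p (N+1) (g-1) (2 - b) c (qPV g c x1 y1) (c * (x + c) / (y - c) + c ^+ 2 * (g + N + 1 - b) * (x + y) / pden g c x y).
Proof.
move=> c0 g0 xy0 x1y0 yc x1y10 k0 e1 e2 pd0 y1c pd1 q1 a0.
have R2nz : x1 * (x1 + c) / (x1 - c * (N+1) / (g - 1)) * (x1 + c * (g - b) / (g - 1)) != 0.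
  by rewrite -e2 mulf_neq0.
have hx1 : x1 != 0 by move: R2nz; rewrite !mulf_eq0 !negb_or => /andP[/andP[/andP[]]].
have hx1c : x1 + c != 0 by move: R2nz; rewrite !mulf_eq0 !negb_or => /andP[/andP[/andP[]]].
have hx1B : x1 + c * (g - b) / (g - 1) != 0 by move: R2nz; rewrite !mulf_eq0 !negb_or => /andP[/andP[/andP[]]].
have R1nz : (g - 1) / c ^+ 2 * y * (y - c) * (y - c * (g - b) / (g - 1)) != 0.
  by rewrite -e1 mulf_neq0.
have hy0 : y != 0 by move: R1nz; rewrite !mulf_eq0 !negb_or => /andP[/andP[/andP[]]].
have hyB : y - c * (g - b) / (g - 1) != 0 by move: R1nz; rewrite !mulf_eq0 !negb_or => /andP[/andP[/andP[]]].
have ey1 : y1 = x1 * (x1 + c) / (x1 - c * (N+1) / (g - 1)) * (x1 + c * (g - b) / (g - 1)) / (x1 + y) - x1.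
  rewrite -e2; field; done.
have [eQ eP] := @QPform _ b g c x y x1 N c0 g0 xy0 x1y0 yc hx1B e1 pd0.
have ep1 : c * (x1 + c) / (y1 - c) + c ^+ 2 * (g + (N + 1) + 1 - b) * (x1 + y1) / pden g c x1 y1
   = c * (x1 + c) / (y1 - c) + (g + (N + 1) + 1 - b) / (1 - qPV g c x1 y1).
  rewrite (@pdenE _ g c x1 y1 c0 x1y10). field. by splitall.
have key := @S3 _ b g c y x1 N c0 g0 x1y0 hx1 hx1c hx1B k0.
rewrite -ey1 in key.
rewrite ep1 eP. rewrite eP in a0.
exact: fin_p.
Qed.

Section D.
Variable K : numFieldType.
Implicit Types (f g : K -> K) (a df dg k : K).

Definition isd (a : K) (f : K -> K) (df : K) := is_derive a 1 f df.
Lemma dC a k : isd a (fun _ : K => k) 0.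
Proof. rewrite /isd; exact: is_derive_cst. Qed.
Lemma dI a : isd a (fun t : K => t) 1.
Proof. rewrite /isd; exact: is_derive_id. Qed.
Lemma dD a f g df dg : isd a f df -> isd a g dg ->
  isd a (fun t => f t + g t) (df + dg).
Proof. rewrite /isd => H1 H2; exact: is_deriveD. Qed.
Lemma dB a f g df dg : isd a f df -> isd a g dg ->
  isd a (fun t => f t - g t) (df - dg).
Proof. rewrite /isd => H1 H2; exact: is_deriveB. Qed.
Lemma dN a f df : isd a f df -> isd a (fun t => - f t) (- df).
Proof. rewrite /isd => H1; exact: is_deriveN. Qed.
Lemma dM a f g df dg : isd a f df -> isd a g dg ->
  isd a (fun t => f t * g t) (f a * dg + g a * df).
Proof. rewrite /isd => H1 H2; exact: is_deriveM. Qed.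
Lemma dX2 a f df : isd a f df -> isd a (fun t => f t ^+ 2) (f a * df + f a * df).
Proof.
rewrite /isd => H1; have -> : (fun t => f t ^+ 2) = (fun t => f t * f t).
  by apply: boolp.funext => t; rewrite expr2.
exact: (dM H1 H1).
Qed.
Lemma dV a f df : f a != 0 -> isd a f df ->
  isd a (fun t => (f t)^-1) (- (f a) ^- 2 * df).
Proof.
rewrite /isd => H0 H1; apply: DeriveDef.
  exact: derivableV.
by rewrite deriveV // derive_val.
Qed.
Lemma dEq a f d1 df : isd a f d1 -> d1 = df -> isd a f df.
Proof. by move=> ? <-. Qed.
End D.
Arguments isd {K}.

Ltac dtac := repeat first [ apply: dC | apply: dI | eassumption | apply: dX2 | apply: dM | apply: dV | apply: dD | apply: dB | apply: dN ].

Lemma cont_q (K : numFieldType) (b g : K) (n : nat) (x y : K -> K) (c : K) :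
  g != 1 -> c != 0 -> derivable x c 1 -> derivable y c 1 ->
  derive1 x c = ode_x b g n c (x c) (y c) ->
  derive1 y c = ode_y b g c (x c) (y c) ->
  x c + y c != 0 -> y c != c -> pden g c (x c) (y c) != 0 ->
  is_derive c 1 (fun t => qPV g t (x t) (y t))
    (ham_q (a1 g) (a3 b g n) c (qPV g c (x c) (y c)) (pPV b g n c (x c) (y c))).
Proof.
move=> g1 c0 dx dy ex ey xy0 yc pd0.
have Hx : isd c x (ode_x b g n c (x c) (y c)) by rewrite /isd -ex derive1E; apply: derivableP.
have Hy : isd c y (ode_y b g c (x c) (y c)) by rewrite /isd -ey derive1E; apply: derivableP.
rewrite -[is_derive _ _ _ _]/(isd _ _ _).
eapply dEq.
  rewrite /qPV; dtac.
  by rewrite mulf_neq0 // expf_neq0.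
have yc' : y c - c != 0 by rewrite subr_eq0.
have g1' : g - 1 != 0 by rewrite subr_eq0.
rewrite /ham_q /a1 /a3 /qPV /pPV /ode_x /ode_y.
rewrite /pden in pd0 *.
field.
by splitall.
Qed.

Lemma cont_p (K : numFieldType) (b g : K) (n : nat) (x y : K -> K) (c : K) :
  g != 1 -> c != 0 -> derivable x c 1 -> derivable y c 1 ->
  derive1 x c = ode_x b g n c (x c) (y c) ->
  derive1 y c = ode_y b g c (x c) (y c) ->
  x c + y c != 0 -> y c != c -> pden g c (x c) (y c) != 0 ->
  is_derive c 1 (fun t => pPV b g n t (x t) (y t))
    (ham_p (a1 g) (a2 b) (a3 b g n) c (qPV g c (x c) (y c)) (pPV b g n c (x c) (y c))).
Proof.
move=> g1 c0 dx dy ex ey xy0 yc pd0.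
have Hx : isd c x (ode_x b g n c (x c) (y c)) by rewrite /isd -ex derive1E; apply: derivableP.
have Hy : isd c y (ode_y b g c (x c) (y c)) by rewrite /isd -ey derive1E; apply: derivableP.
have yc' : y c - c != 0 by rewrite subr_eq0.
have g1' : g - 1 != 0 by rewrite subr_eq0.
rewrite -[is_derive _ _ _ _]/(isd _ _ _).
eapply dEq.
  rewrite /pPV /pden; dtac.
all: rewrite /pden in pd0; try done.
rewrite /ham_p /a1 /a2 /a3 /qPV /pPV /ode_x /ode_y /pden.
field.
by splitall.
Qed.

Unset Implicit Arguments.

Theorem proposition4p18 (R : realType) (beta gamma : CC R)
  (hg1 : gamma != 1) (hbg : beta != gamma) :
  (* discrete part *)
  (forall (c : CC R) (x y : nat -> CC R),
     c != 0 ->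
     (forall n, disc_eq1 beta gamma c (x n.+1) (x n) (y n)) ->
     (forall n, disc_eq2 beta gamma c n.+1 (x n.+1) (y n) (y n.+1)) ->
     (* genericity: all denominators (and x_{n+1}+y_n) are nonzero *)
     (forall n, x n + y n != 0) ->
     (forall n, x n.+1 + y n != 0) ->
     (forall n, y n != c) ->
     (forall n, pden gamma c (x n) (y n) != 0) ->
     (forall n, x n - c * n%:R / (gamma - 1) != 0) ->
     let q n := qPV gamma c (x n) (y n) in
     let p n := pPV beta gamma n c (x n) (y n) in
     (forall n, a0 n + (p n + c) * q n != 0) ->
     (forall n, 1 - q n.+1 != 0) ->
     (forall n, c + p n - c * q n.+1 != 0) ->
     forall n,
       q n.+1 = dP_q (a0 n) (a1 gamma) c (q n) (p n) /\
       p n.+1 = dP_p (a0 n) (a1 gamma) (a2 beta) c (q n.+1) (p n) /\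
       (* parameter evolution n -> n+1 *)
       (a0 (C:=CC R) n.+1, a1 gamma, a2 beta, a3 beta gamma n.+1)
         = (a0 n + 1, a1 gamma, a2 beta, a3 beta gamma n - 1)) /\
  (* continuous part *)
  (forall (n : nat) (x y : CC R -> CC R) (c : CC R),
     c != 0 ->
     derivable x c 1 -> derivable y c 1 ->
     derive1 x c = ode_x beta gamma n c (x c) (y c) ->
     derive1 y c = ode_y beta gamma c (x c) (y c) ->
     x c + y c != 0 -> y c != c -> pden gamma c (x c) (y c) != 0 ->
     let q t := qPV gamma t (x t) (y t) in
     let p t := pPV beta gamma n t (x t) (y t) in
     derivable q c 1 /\ derivable p c 1 /\
     derive1 q c = ham_q (a1 gamma) (a3 beta gamma n) c (q c) (p c) /\
     derive1 p c = ham_p (a1 gamma) (a2 beta) (a3 beta gamma n) c (q c) (p c)).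

Proof.
have g1' : gamma - 1 != 0 by rewrite subr_eq0.
split.
  move=> c x y c0 e1 e2 h1 h2 h3 h4 h5 q p h6 h7 h8 n.
  have eN : (n.+1)%:R = n%:R + 1 :> CC R by rewrite mulrSr.
  have yc : forall m, y m - c != 0 by move=> m; rewrite subr_eq0.
  have k0 : x n.+1 - c * (n%:R + 1) / (gamma - 1) != 0 by rewrite -eN.
  have E1 := e1 n; rewrite /disc_eq1 in E1.
  have E2 := e2 n; rewrite /disc_eq2 eN in E2.
  have A0 := h6 n; rewrite /q /p /a0 in A0.
  have Q1 := h7 n; rewrite /q in Q1.
  have A8 := h8 n; rewrite /q /p in A8.
  split; last split.
  - rewrite /q /p /a0 /a1.
    exact: (@disc_q (CC R) beta gamma c (x n) (y n) (x n.+1) (y n.+1) n%:R c0 g1' (h1 n) (h2 n) (yc n) (h1 n.+1) k0 E1 E2 (h4 n) A0).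
  - rewrite /q /p /a0 /a1 /a2 /pPV eN.
    exact: (@disc_p (CC R) beta gamma c (x n) (y n) (x n.+1) (y n.+1) n%:R c0 g1' (h1 n) (h2 n) (yc n) (h1 n.+1) k0 E1 E2 (h4 n) (yc n.+1) (h4 n.+1) Q1 A8).
  - rewrite /a0 /a3 eN; congr (_, _, _, _); ring.
move=> n x y c c0 dx dy ex ey xy0 yc pd0 q p.
have Hq := @cont_q (CC R) beta gamma n x y c hg1 c0 dx dy ex ey xy0 yc pd0.
have Hp := @cont_p (CC R) beta gamma n x y c hg1 c0 dx dy ex ey xy0 yc pd0.
case: Hq => Dq Vq; case: Hp => Dp Vp.
split; first exact Dq.
split; first exact Dp.
split.
  rewrite derive1E; exact Vq.
rewrite derive1E; exact Vp.
Qed.
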